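(* For every integer $N\ge4$, $$\frac{h_N'''(0)}{h_N(0)}-\frac{h_{N-1}'''(0)}{h_{N-1}(0)}-\frac32\left(\frac{h_N'(0)}{h_N(0)}\right)^2-\frac{21}{2}\left(\frac{h_{N-2}(0)}{h_{N-1}(0)}-\frac74\right)=0.$$
   Context: $h_N(z)={}_2F_1(-N+1,N;2N;1-z)=\sum_{r=1}^N H_N^{(r)}z^{r-1}$ with $H_N^{(r)}=\binom{N+r-2}{N-1}\binom{2N-1-r}{N-1}/\binom{3N-2}{N-1}$ (the ice-point boundary one-point generating function). *)

(* Defs.v *)
From HB Require Import structures.
From mathcomp Require Import all_boot all_order all_algebra.
Set Implicit Arguments. Unset Strict Implicit. Unset Printing Implicit Defensive.
Import Order.TTheory GRing.Theory Num.Theory.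
Local Open Scope ring_scope.

Definition Hcoef (N r : nat) : rat :=
  ('C(N + r - 2, N - 1) * 'C(2 * N - 1 - r, N - 1))%:R / ('C(3 * N - 2, N - 1))%:R.

Definition hpoly (N : nat) : {poly rat} := \poly_(i < N) Hcoef N i.+1.

(* Main.v *)
Require Import Defs.
From mathcomp Require Import all_boot all_order all_algebra.
From mathcomp Require Import ring lra zify.
Import GRing.Theory Num.Theory.
Local Open Scope ring_scope.

Lemma factR_neq0 n : (n`!%:R : rat) != 0.
Proof. by rewrite pnatr_eq0 -lt0n fact_gt0. Qed.

Lemma binR n k : (k <= n)%N ->
  ('C(n,k)%:R : rat) = n`!%:R / (k`!%:R * (n-k)`!%:R).
Proof. 
move=> H; rewrite -(bin_fact H) !natrM.
field; apply/andP; split; exact: factR_neq0.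
Qed.

Lemma hp0 M : (0 < M)%N -> (hpoly M).[0] = Hcoef M 1.
Proof. by move=> H; rewrite horner_coef0 /hpoly coef_poly H. Qed.

Lemma hp1 M : (1 < M)%N -> (hpoly M)^`().[0] = Hcoef M 2.
Proof. by move=> H; rewrite horner_coef0 coef_deriv /hpoly coef_poly H. Qed.

Lemma hp3 M : (3 < M)%N -> (hpoly M)^`(3).[0] = Hcoef M 4 *+ 6.
Proof. by move=> H; rewrite horner_coef0 coef_derivn /hpoly coef_poly addn0 H. Qed.

Lemma hp3' : (hpoly 3)^`(3).[0] = 0.
Proof. by rewrite horner_coef0 coef_derivn /hpoly coef_poly addn0. Qed.

Lemma hL0 M : (0 < M)%N -> (locked hpoly M).[0] = Hcoef M 1.
Proof. rewrite -lock; exact: hp0. Qed.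
Lemma hL1 M : (1 < M)%N -> (locked hpoly M)^`().[0] = Hcoef M 2.
Proof. rewrite -lock; exact: hp1. Qed.
Lemma hL3 M : (3 < M)%N -> (locked hpoly M)^`(3).[0] = Hcoef M 4 *+ 6.
Proof. rewrite -lock; exact: hp3. Qed.
Lemma hL3' : (locked hpoly 3)^`(3).[0] = 0.
Proof. rewrite -lock; exact: hp3'. Qed.

Lemma four : (hpoly 4)^`(3).[0] / (hpoly 4).[0]
  - (hpoly 3)^`(3).[0] / (hpoly 3).[0]
  - 3%:R / 2%:R * ((hpoly 4)^`().[0] / (hpoly 4).[0]) ^+ 2
  - 21%:R / 2%:R * ((hpoly 2).[0] / (hpoly 3).[0] - 7%:R / 4%:R) = 0.
Proof.
rewrite [hpoly]lock.
rewrite hL3' (@hL3 4 isT) (@hL0 4 isT) (@hL0 3 isT) (@hL0 2 isT) (@hL1 4 isT).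
apply/eqP. vm_compute. reflexivity.
Qed.

Notation F n := ((n)`!%:R : rat).
Lemma HcoefF N r : (1 <= r <= N)%N -> Hcoef N r =
  F (N+r-2) / (F (N-1) * F (r-1)) * (F (2*N-1-r) / (F (N-1) * F (N-r)))
  / (F (3*N-2) / (F (N-1) * F (2*N-1))).
Proof.
case/andP=> h1 h2; rewrite /Hcoef natrM !binR; try lia.
have -> : (N + r - 2 - (N - 1) = r - 1)%N by lia.
have -> : (2 * N - 1 - r - (N - 1) = N - r)%N by lia.
by have -> : (3 * N - 2 - (N - 1) = 2 * N - 1)%N by lia.
Qed.

Theorem mainTheorem8 (N : nat) (hN : (4 <= N)%N) :
  (hpoly N)^`(3).[0] / (hpoly N).[0]
  - (hpoly N.-1)^`(3).[0] / (hpoly N.-1).[0]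
  - 3%:R / 2%:R * ((hpoly N)^`().[0] / (hpoly N).[0]) ^+ 2
  - 21%:R / 2%:R * ((hpoly N.-2).[0] / (hpoly N.-1).[0] - 7%:R / 4%:R) = 0.
Proof. 
case: N hN => [|[|[|[|[|k]]]]] // _; first exact: four.
rewrite [hpoly]lock /= !hL3 // !hL0 // hL1 // !HcoefF //.
have e : (k.+4.+1 + 1 - 2 = k.+4)%N by lia. rewrite ?e {e}.
have e : (k.+4.+1 - 1 = k.+4)%N by lia. rewrite ?e {e}.
have e : (1 - 1 = 0)%N by lia. rewrite ?e {e}.
have e : (2 * k.+4.+1 - 1 - 1 = (k*2).+4.+4)%N by lia. rewrite ?e {e}.
have e : (3 * k.+4.+1 - 2 = (k*3).+4.+4.+4.+1)%N by lia. rewrite ?e {e}.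
have e : (2 * k.+4.+1 - 1 = (k*2).+4.+4.+1)%N by lia. rewrite ?e {e}.
have e : (k.+4.+1 + 2 - 2 = k.+4.+1)%N by lia. rewrite ?e {e}.
have e : (2 - 1 = 1)%N by lia. rewrite ?e {e}.
have e : (2 * k.+4.+1 - 1 - 2 = (k*2).+4.+3)%N by lia. rewrite ?e {e}.
have e : (k.+4.+1 - 2 = k.+3)%N by lia. rewrite ?e {e}.
have e : (k.+4.+1 + 4 - 2 = k.+4.+3)%N by lia. rewrite ?e {e}.
have e : (4 - 1 = 3)%N by lia. rewrite ?e {e}.
have e : (2 * k.+4.+1 - 1 - 4 = (k*2).+4.+1)%N by lia. rewrite ?e {e}.
have e : (k.+4.+1 - 4 = k.+1)%N by lia. rewrite ?e {e}.
have e : (k.+4 + 1 - 2 = k.+3)%N by lia. rewrite ?e {e}.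
have e : (k.+4 - 1 = k.+3)%N by lia. rewrite ?e {e}.
have e : (2 * k.+4 - 1 - 1 = (k*2).+4.+2)%N by lia. rewrite ?e {e}.
have e : (3 * k.+4 - 2 = (k*3).+4.+4.+2)%N by lia. rewrite ?e {e}.
have e : (2 * k.+4 - 1 = (k*2).+4.+3)%N by lia. rewrite ?e {e}.
have e : (k.+4 + 2 - 2 = k.+4)%N by lia. rewrite ?e {e}.
have e : (2 * k.+4 - 1 - 2 = (k*2).+4.+1)%N by lia. rewrite ?e {e}.
have e : (k.+4 - 2 = k.+2)%N by lia. rewrite ?e {e}.
have e : (k.+4 + 4 - 2 = k.+4.+2)%N by lia. rewrite ?e {e}.
have e : (2 * k.+4 - 1 - 4 = (k*2).+3)%N by lia. rewrite ?e {e}.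
have e : (k.+4 - 4 = k)%N by lia. rewrite ?e {e}.
have e : (k.+3 + 1 - 2 = k.+2)%N by lia. rewrite ?e {e}.
have e : (k.+3 - 1 = k.+2)%N by lia. rewrite ?e {e}.
have e : (2 * k.+3 - 1 - 1 = (k*2).+4)%N by lia. rewrite ?e {e}.
have e : (3 * k.+3 - 2 = (k*3).+4.+3)%N by lia. rewrite ?e {e}.
have e : (2 * k.+3 - 1 = (k*2).+4.+1)%N by lia. rewrite ?e {e}.
have e : (k.+3 + 2 - 2 = k.+3)%N by lia. rewrite ?e {e}.
have e : (2 * k.+3 - 1 - 2 = (k*2).+3)%N by lia. rewrite ?e {e}.
have e : (k.+3 - 2 = k.+1)%N by lia. rewrite ?e {e}.
have e : (k.+3 + 4 - 2 = k.+4.+1)%N by lia. rewrite ?e {e}.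
have e : (2 * k.+3 - 1 - 4 = (k*2).+1)%N by lia. rewrite ?e {e}.
rewrite !subSS !subn0 !factS fact0 !natrM !mulrS.
have f1 := factR_neq0 k. have f2 := factR_neq0 (k*2). have f3 := factR_neq0 (k*3).
have hk : 0 <= k%:R :> rat := ler0n _ _.
rewrite ?mulr1n.
field.
repeat (apply/andP; split); try assumption; apply: lt0r_neq0; lra.
Qed.
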